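(* Let $V=\{i_1,\dots,i_m\}$ and let $\bm X$ (standard exponential margins) follow the chain geometric extremal graphical model with edges $\{i_1,i_2\},\dots,\{i_{m-1},i_m\}$, i.e. $g(\bm x)=\sum_{l=1}^{m-1}g_{\{i_l,i_{l+1}\}}(x_{i_l},x_{i_{l+1}})-\sum_{l=2}^{m-1}x_{i_l}$. Then for any $k\in\{1,\dots,m\}$, the marginal gauge $g_{V_{-k}}(\bm x_{V_{-k}})=\min_{x_{i_k}\ge0}g(\bm x)$ of $\bm X_{V_{-k}}$, $V_{-k}=V\setminus\{i_k\}$, is that of the chain geometric extremal graphical model on $V_{-k}$ with edges $E_{-k}=\{\{i_1,i_2\},\dots,\{i_{k-1},i_{k+1}\},\dots,\{i_{m-1},i_m\}\}$: $g_{V_{-k}}(\bm x_{V_{-k}})=\sum_{\{a,b\}\in E_{-k}}g_{\{a,b\}}(x_a,x_b)-\sum x_{i_l}$, where the last sum runs over the interior (non-endpoint) vertices of the chain $V_{-k}$.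
   Context: $g$ is the gauge of $\bm X$: $-\log f(t\bm x_t)/t\to g(\bm x)$ as $t\to\infty$ whenever $\bm x_t\to\bm x\in[0,\infty)^m$, $f$ the Lebesgue density; marginal gauges $g_J(\bm x_J)=\min_{x_s\ge0,\,s\notin J}g(\bm x)$ satisfy $g_J\ge\max_{j\in J}x_j$; in particular $g_{\{a,b\}}$ denotes the bivariate marginal gauge of $(X_a,X_b)$. *)

(* Defs.v *)
From HB Require Import structures.
From mathcomp Require Import all_boot all_order all_algebra.
From mathcomp Require Import classical_sets boolp reals.
Set Implicit Arguments. Unset Strict Implicit. Unset Printing Implicit Defensive.
Import Order.TTheory GRing.Theory Num.Theory.
Local Open Scope ring_scope.
Local Open Scope classical_set_scope.

(* Points of [0,oo)^m are functions 'I_m -> R; vertex set V = 'I_m. *)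
Definition nonneg (R : realType) (m : nat) (x : 'I_m -> R) : Prop :=
  forall j, 0 <= x j.

(* Marginal gauge g_J(x_J) = min_{x_s >= 0, s notin J} g(x), (taken as an
   infimum; only the coordinates of y in J matter). *)
Definition margG (R : realType) (m : nat) (g : ('I_m -> R) -> R)
    (J : pred 'I_m) (y : 'I_m -> R) : R :=
  inf [set g z | z in [set z | nonneg z /\ forall j, J j -> z j = y j]].

(* Gauge of the chain geometric extremal graphical model on the chain
   s = [:: v_1; ...; v_n] (ordered vertex list), with edges {v_l, v_(l+1)}:
   sum over edges of the bivariate marginal gauges of g, minus the sum of
   y over the interior vertices v_2, ..., v_(n-1). *)
Definition chain_formula (R : realType) (m : nat) (g : ('I_m -> R) -> R)
    (s : seq 'I_m) (y : 'I_m -> R) : R :=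
  \sum_(p <- zip s (behead s)) margG g (pred2 p.1 p.2) y
  - \sum_(v <- take (size s).-2 (behead s)) y v.

(* Main.v *)
Require Import Defs.
From HB Require Import structures.
From mathcomp Require Import all_boot all_order all_algebra.
From mathcomp Require Import classical_sets boolp reals.
From mathcomp Require Import zify ring lra.
Import Order.TTheory GRing.Theory Num.Theory.
Local Open Scope ring_scope.
Local Open Scope classical_set_scope.
Set Implicit Arguments. Unset Strict Implicit.

Definition upd (R : realType) (m : nat) (y : 'I_m -> R) (a : 'I_m) (t : R) :=
  fun j => if j == a then t else y j.
Arguments upd {R m}.

Lemma margG_ext (R : realType) (m : nat) (g : ('I_m -> R) -> R) (J1 J2 : pred 'I_m) y :
  J1 =1 J2 -> margG g J1 y = margG g J2 y.
Proof. by move=> h; have -> : J1 = J2 by apply: funext. Qed.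

Lemma margG_loc (R : realType) (m : nat) (g : ('I_m -> R) -> R) (J : pred 'I_m) y y' :
  (forall j, J j -> y j = y' j) -> margG g J y = margG g J y'.
Proof.
move=> h; rewrite /margG; congr inf; apply/seteqP; split => _ [z [zn zJ] <-];
  exists z => //; split => // j Jj; rewrite zJ // ?h //; by rewrite -h.
Qed.

Lemma inf_shift (R : realType) (T : Type) (P : set T) (h : T -> R) (c : R) :
  P !=set0 -> has_lbound [set h t | t in P] ->
  inf [set h t + c | t in P] = inf [set h t | t in P] + c.
Proof.
move=> [t0 Pt0] [l lb].
have lb' : has_lbound [set h t + c | t in P].
  by exists (l + c) => _ [t Pt <-]; rewrite lerD2r; apply: lb; exists t.
apply/eqP; rewrite eq_le; apply/andP; split.
- rewrite -lerBlDr; apply: lb_le_inf; first by exists (h t0), t0.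
  move=> _ [t Pt <-]; rewrite lerBlDr; apply: ge_inf => //; by exists t.
- apply: lb_le_inf; first by exists (h t0 + c), t0.
  move=> _ [t Pt <-]; rewrite lerD2r; apply: ge_inf; [by exists l|by exists t].
Qed.

Lemma margG_lb (R : realType) (m : nat) (g : ('I_m -> R) -> R)
  (g0 : forall x, nonneg x -> 0 <= g x) J y :
  lbound [set g z | z in [set z | nonneg z /\ forall j, J j -> z j = y j]] 0.
Proof. by move=> _ [z [zn _] <-]; apply: g0. Qed.

Lemma margG_ge0 (R : realType) (m : nat) (g : ('I_m -> R) -> R)
  (g0 : forall x, nonneg x -> 0 <= g x) J y : 0 <= margG g J y.
Proof.
rewrite /margG.
have [[x Sx]|S0] := pselect ([set g z | z in [set z | nonneg z /\ forall j, J j -> z j = y j]] !=set0).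
  by apply: lb_le_inf; [exists x|apply: margG_lb].
rewrite (_ : [set _ | _ in _] = set0) ?inf0 //.
by apply/seteqP; split => // x Sx; apply: S0; exists x.
Qed.

Lemma margG_step (R : realType) (m : nat) (g : ('I_m -> R) -> R)
  (g0 : forall x, nonneg x -> 0 <= g x) (J J' : pred 'I_m) a (y : 'I_m -> R) :
  (forall j, J j = (j == a) || J' j) -> ~~ J' a -> (forall j, J' j -> 0 <= y j) ->
  margG g J' y = inf [set margG g J (upd y a t) | t in [set t : R | 0 <= t]].
Proof.
move=> hJ hJ'a yn.
pose z0 (t : R) := fun j => if J j then upd y a t j else 0.
have z0n t : 0 <= t -> nonneg (z0 t).
  move=> t0 j; rewrite /z0 /upd; case: ifP => // Jj; case: ifP => // /negbT ja.
  by apply: yn; move: Jj; rewrite hJ (negbTE ja).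
have z0J t : forall j, J j -> z0 t j = upd y a t j by move=> j Jj; rewrite /z0 Jj.
have ne t : 0 <= t -> [set g z | z in [set z | nonneg z /\ forall j, J j -> z j = upd y a t j]] !=set0.
  by move=> t0; exists (g (z0 t)), (z0 t); split; [exact: z0n | exact: z0J].
have ha j : J' j -> j != a by apply: contraTneq => ->.
apply/eqP; rewrite eq_le; apply/andP; split.
- apply: lb_le_inf; first by exists (margG g J (upd y a 0)); exists 0 => //=.
  move=> _ [t t0 <-]; apply: lb_le_inf; first exact: ne.
  move=> _ [z [zn zJ] <-]; apply: ge_inf; first by exists 0; apply: margG_lb.
  exists z => //; split => // j J'j; rewrite zJ ?hJ ?J'j ?orbT // /upd.
  by rewrite (negbTE (ha _ J'j)).
- apply: lb_le_inf.
    exists (g (z0 0)), (z0 0); split; first exact: z0n.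
    move=> j J'j; rewrite z0J ?hJ ?J'j ?orbT // /upd (negbTE (ha _ J'j)) //.
  move=> _ [z [zn zJ] <-].
  apply: (@le_trans _ _ (margG g J (upd y a (z a)))).
    apply: ge_inf; first by exists 0 => _ [t _ <-]; apply: margG_ge0.
    by exists (z a) => //; exact: zn.
  apply: ge_inf; first by exists 0; apply: margG_lb.
  exists z => //; split => // j; rewrite hJ /upd => /orP[/eqP -> | J'j].
    by rewrite eqxx.
  by rewrite (negbTE (ha _ J'j)) zJ.
Qed.

Lemma CFnat (R : realType) (m : nat) (g : ('I_m -> R) -> R) (s : seq 'I_m) d y :
  chain_formula g s y =
  \sum_(0 <= l < (size s).-1) margG g (pred2 (nth d s l) (nth d s l.+1)) y
  - \sum_(1 <= l < (size s).-1) y (nth d s l).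
Proof.
rewrite /chain_formula (big_nth (d,d)) size_zip size_behead (minn_idPr (leq_pred _)).
congr (_ - _).
  apply: eq_big_nat => l /andP[_ hl].
  by rewrite nth_zip_cond size_zip size_behead (minn_idPr (leq_pred _)) hl /= nth_behead.
rewrite (big_nth d) size_take size_behead big_add1.
have -> : (if ((size s).-2 < (size s).-1)%N then (size s).-2 else (size s).-1) = (size s).-2.
  by case: ifP => // /negbT; case: (size s) => [|[|n]] //=; rewrite ltnSn.
apply: eq_big_nat => l /andP[_ hl].
by rewrite nth_take // nth_behead.
Qed.

Definition fch (m : nat) (i : 'I_m -> 'I_m) (d : 'I_m) (l : nat) := i (insubd d l).
Arguments fch {m}.

Definition seg (m : nat) (i : 'I_m -> 'I_m) (hi : injective i) (p q : nat) : pred 'I_m :=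
  fun j => (p <= invF hi j <= q)%N.
Arguments seg {m i}.

Lemma fchK m (i : 'I_m -> 'I_m) (hi : injective i) d l :
  (l < m)%N -> (invF hi (fch i d l) : nat) = l.
Proof. by move=> hl; rewrite /fch invF_f; exact: insubdK. Qed.

Lemma fch_eq m (i : 'I_m -> 'I_m) (hi : injective i) d l j :
  (l < m)%N -> (j == fch i d l) = ((invF hi j : nat) == l).
Proof.
move=> hl; apply/eqP/eqP => [->|h]; first exact: fchK.
rewrite -(f_invF hi j) /fch; congr i; apply: val_inj; by rewrite insubdK.
Qed.

Lemma fch_inj m (i : 'I_m -> 'I_m) (hi : injective i) d l l' :
  (l < m)%N -> (l' < m)%N -> (fch i d l == fch i d l') = (l == l').
Proof. by move=> hl hl'; rewrite (fch_eq hi) // fchK. Qed.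

Definition SF (R : realType) (m : nat) (g : ('I_m -> R) -> R) (f : nat -> 'I_m)
  (p q : nat) (y : 'I_m -> R) :=
  \sum_(p <= l < q) margG g (pred2 (f l) (f l.+1)) y - \sum_(p.+1 <= l < q) y (f l).
Arguments SF {R m}.

Lemma image_eqP (R : realType) (T : Type) (P : set T) (F G : T -> R) :
  (forall t, P t -> F t = G t) -> [set F t | t in P] = [set G t | t in P].
Proof.
move=> h; apply/seteqP; split => _ [t Pt <-]; exists t => //; by rewrite h.
Qed.

Lemma edge_l (R : realType) (m : nat) (g : ('I_m -> R) -> R)
  (g0 : forall x, nonneg x -> 0 <= g x)
  (hexp : forall (j : 'I_m) (y : 'I_m -> R), 0 <= y j -> margG g (pred1 j) y = y j)
  a b y : a != b -> 0 <= y b ->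
  inf [set margG g (pred2 a b) (upd y a t) | t in [set t : R | 0 <= t]] = y b.
Proof.
move=> ab yb; rewrite -(@margG_step _ _ _ g0 _ (pred1 b)) ?hexp //=;
  by do ?[by move=> j /eqP -> | by move=> j; rewrite orbC | by rewrite eq_sym].
Qed.

Lemma edge_r (R : realType) (m : nat) (g : ('I_m -> R) -> R)
  (g0 : forall x, nonneg x -> 0 <= g x)
  (hexp : forall (j : 'I_m) (y : 'I_m -> R), 0 <= y j -> margG g (pred1 j) y = y j)
  a b y : a != b -> 0 <= y b ->
  inf [set margG g (pred2 b a) (upd y a t) | t in [set t : R | 0 <= t]] = y b.
Proof.
move=> ab yb; rewrite -(@margG_step _ _ _ g0 _ (pred1 b)) ?hexp //=;
  by do ?[by move=> j /eqP -> | by move=> j; rewrite orbC | by rewrite eq_sym].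
Qed.

Lemma Seg (R : realType) (m : nat) (g : ('I_m -> R) -> R) (i : 'I_m -> 'I_m)
  (hi : injective i) (d : 'I_m)
  (g0 : forall x, nonneg x -> 0 <= g x)
  (hexp : forall (j : 'I_m) (y : 'I_m -> R), 0 <= y j -> margG g (pred1 j) y = y j)
  (hfull : forall y, nonneg y -> g y = SF g (fch i d) 0 m.-1 y) :
  forall n p q y, (p + (m.-1 - q) = n)%N -> (p < q)%N -> (q < m)%N ->
  (forall j, seg hi p q j -> 0 <= y j) -> margG g (seg hi p q) y = SF g (fch i d) p q y.
Proof.
have lbT (h : R -> R) : (forall t, 0 <= h t) -> has_lbound [set h t | t in [set t : R | 0 <= t]].
  by move=> h0; exists 0 => _ [t _ <-].
have neT (h : R -> R) : [set h t | t in [set t : R | 0 <= t]] !=set0.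
  by exists (h 0), 0 => //=.
elim=> [|n IH] p q y hn pq qm yn.
  have p0 : p = 0%N by lia.
  have qm1 : q = m.-1 by lia.
  subst p q.
  have segT j : seg hi 0 m.-1 j by rewrite /seg /=; have := ltn_ord (invF hi j); lia.
  have yn' : nonneg y by move=> j; apply: yn; apply: segT.
  rewrite /margG (_ : [set g z | z in _] = [set g y]); first by rewrite inf1 hfull.
  apply/seteqP; split => [_ [z [zn zJ] <-]|_ ->].
    have zy : z = y by apply: funext => j; apply: zJ; apply: segT.
    by rewrite zy.
  by exists y.
have [p0|pp] := eqVneq p 0%N.
  subst p.
  have qm1 : (q.+1 < m)%N by lia.
  set a := fch i d q.+1.
  have hJ j : seg hi 0 q.+1 j = (j == a) || seg hi 0 q j.
    by rewrite /seg /a (fch_eq hi) //; lia.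
  have naJ : ~~ seg hi 0 q a by rewrite /seg /a fchK //; lia.
  rewrite (@margG_step _ _ _ g0 (seg hi 0 q.+1) (seg hi 0 q) a y) //.
  rewrite (@image_eqP _ _ _ _ (fun t => margG g (pred2 (fch i d q) a) (upd y a t)
              + (SF g (fch i d) 0 q y - y (fch i d q)))); last first.
    move=> t t0; rewrite IH //; try lia; last first.
      by move=> j; rewrite hJ /upd; case: eqP => //= _ /yn.
    have q1 : (1 <= q)%N by lia.
    rewrite /SF big_nat_recr // (big_nat_recr q 1 _ q1).
    have e1 : \sum_(0 <= l < q) margG g (pred2 (fch i d l) (fch i d l.+1)) (upd y a t)
        = \sum_(0 <= l < q) margG g (pred2 (fch i d l) (fch i d l.+1)) y.
      apply: eq_big_nat => l /andP[_ lq]; apply: margG_loc => j /orP[] /eqP ->;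
        rewrite /upd /a fch_inj ?ifN //; lia.
    have e2 : \sum_(1 <= l < q) upd y a t (fch i d l) = \sum_(1 <= l < q) y (fch i d l).
      apply: eq_big_nat => l /andP[_ lq]; rewrite /upd /a fch_inj ?ifN //; lia.
    have e3 : upd y a t (fch i d q) = y (fch i d q) by rewrite /upd /a fch_inj ?ifN //; lia.
    rewrite e1 e2 e3 /=; ring.
  rewrite (@inf_shift _ _ _ (fun t => margG g (pred2 (fch i d q) a) (upd y a t)));
    [| by exists 0; rewrite /= lexx | by apply: lbT => t; apply: margG_ge0].
  rewrite edge_r //; first ring.
    by rewrite /a fch_inj //; lia.
  by apply: yn; rewrite /seg fchK //; lia.
case: p pp hn pq yn => [//|p'] _ hn pq yn.
have p'm : (p' < m)%N by lia.
set a := fch i d p'.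
have hJ j : seg hi p' q j = (j == a) || seg hi p'.+1 q j.
  by rewrite /seg /a (fch_eq hi) //; lia.
have naJ : ~~ seg hi p'.+1 q a by rewrite /seg /a fchK //; lia.
rewrite (@margG_step _ _ _ g0 (seg hi p' q) (seg hi p'.+1 q) a y) //.
rewrite (@image_eqP _ _ _ _ (fun t => margG g (pred2 a (fch i d p'.+1)) (upd y a t)
            + (SF g (fch i d) p'.+1 q y - y (fch i d p'.+1)))); last first.
  move=> t t0; rewrite IH //; try lia; last first.
    by move=> j; rewrite hJ /upd; case: eqP => //= _ /yn.
  rewrite /SF big_ltn //; last by lia.
  rewrite [X in _ - X]big_ltn //.
  have e1 : \sum_(p'.+1 <= l < q) margG g (pred2 (fch i d l) (fch i d l.+1)) (upd y a t)
      = \sum_(p'.+1 <= l < q) margG g (pred2 (fch i d l) (fch i d l.+1)) y.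
    apply: eq_big_nat => l /andP[pl lq]; apply: margG_loc => j /orP[] /eqP ->;
      rewrite /upd /a fch_inj ?ifN //; lia.
  have e2 : \sum_(p'.+2 <= l < q) upd y a t (fch i d l) = \sum_(p'.+2 <= l < q) y (fch i d l).
    apply: eq_big_nat => l /andP[pl lq]; rewrite /upd /a fch_inj ?ifN //; lia.
  have e3 : upd y a t (fch i d p'.+1) = y (fch i d p'.+1).
    by rewrite /upd /a fch_inj ?ifN //; lia.
  rewrite e1 e2 e3 /=; ring.
rewrite (@inf_shift _ _ _ (fun t => margG g (pred2 a (fch i d p'.+1)) (upd y a t)));
  [| by exists 0; rewrite /= lexx | by apply: lbT => t; apply: margG_ge0].
rewrite edge_l //; first ring.
  by rewrite /a fch_inj //; lia.
by apply: yn; rewrite /seg fchK //; lia.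
Qed.

Lemma seq_filter m (i : 'I_m -> 'I_m) (k : 'I_m) :
  [seq i l | l <- enum 'I_m & l != k] =
  map (fch i k) (map (fun l => if (l < k)%N then l else l.+1) (iota 0 m.-1)).
Proof.
have e : enum 'I_m = map (insubd k) (iota 0 m).
  by rewrite -val_enum_ord -map_comp (eq_map (valKd k)) map_id.
rewrite e filter_map [RHS](@map_comp _ _ _ i (insubd k)); congr (map i (map (insubd k) _)).
rewrite (@eq_in_filter _ _ (fun l => l != (k : nat))); last first.
  move=> l; rewrite mem_iota => /andP[_ hl] /=.
  by rewrite -(inj_eq val_inj) /= insubdK.
have km := ltn_ord k.
set r := (m - k.+1)%N.
rewrite (_ : iota 0 m = iota 0 (k + r.+1)); last by congr iota; lia.
rewrite (_ : iota 0 m.-1 = iota 0 (k + r)); last by congr iota; lia.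
rewrite !iotaD filter_cat map_cat /= add0n eqxx /=.
have e1 : [seq x <- iota 0 k | x != (k : nat)] = iota 0 k.
  by apply/all_filterP/allP => l; rewrite mem_iota; lia.
have e2 : [seq x <- iota k.+1 r | x != (k : nat)] = iota k.+1 r.
  by apply/all_filterP/allP => l; rewrite mem_iota; lia.
have e3 : [seq (if (l < k)%N then l else l.+1) | l <- iota 0 k] = iota 0 k.
  rewrite -[RHS]map_id; apply/eq_in_map => l; rewrite mem_iota => /andP[_ hl].
  by rewrite hl.
have e4 : [seq (if (l < k)%N then l else l.+1) | l <- iota k r] = iota k.+1 r.
  rewrite -addn1 addnC iotaDl; apply/eq_in_map => l; rewrite mem_iota => /andP[hl _].
  by rewrite ltnNge hl /= addnC addn1.
by rewrite e1 e2 e3 e4.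
Qed.

Lemma SF_split (R : realType) m (g : ('I_m -> R) -> R) (f : nat -> 'I_m) k' M (y : 'I_m -> R) :
  (k'.+2 <= M)%N ->
  SF g f 0 M y = SF g f k' k'.+2 y +
    (\sum_(0 <= l < k') margG g (pred2 (f l) (f l.+1)) y
     + \sum_(k'.+2 <= l < M) margG g (pred2 (f l) (f l.+1)) y
     - \sum_(1 <= l < k'.+1) y (f l) - \sum_(k'.+2 <= l < M) y (f l)).
Proof.
move=> hM; rewrite /SF (@big_cat_nat _ _ _ k' 0%N M); try lia.
rewrite (@big_cat_nat _ _ _ k'.+2 k' M); try lia.
rewrite (@big_cat_nat _ _ _ k'.+1 1%N M); try lia.
rewrite (@big_cat_nat _ _ _ k'.+2 k'.+1 M); try lia.
rewrite /=; ring.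
Qed.

Unset Implicit Arguments.
Local Close Scope classical_set_scope.

Theorem lemma3 (R : realType) (m : nat) (hm : (3 <= m)%N)
  (g : ('I_m -> R) -> R)
  (i : 'I_m -> 'I_m) (hi : injective i)
  (* gauge lower bound g(x) >= max_j x_j *)
  (gmax : forall x : 'I_m -> R, nonneg x -> forall j, x j <= g x)
  (* standard exponential margins: univariate marginal gauges g_{j}(x) = x *)
  (hexp : forall (j : 'I_m) (y : 'I_m -> R), 0 <= y j -> margG g (pred1 j) y = y j)
  (* chain geometric extremal graphical model along i_1, ..., i_m *)
  (hchain : forall x : 'I_m -> R, nonneg x ->
     g x = chain_formula g [seq i l | l <- enum 'I_m] x)
  (k : 'I_m) :
  forall y : 'I_m -> R, (forall j, j != i k -> 0 <= y j) ->
    margG g (fun j => j != i k) y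
    = chain_formula g [seq i l | l <- enum 'I_m & l != k] y.
Proof.
move=> y yn.
have g0 : forall x, nonneg x -> 0 <= g x.
  by move=> x xn; apply: le_trans (gmax x xn k); exact: xn.
set f := fch i k.
have fk : i k = f k by rewrite /f /fch valKd.
have hseq : [seq i l | l <- enum 'I_m] = map f (iota 0 m).
  by rewrite -val_enum_ord -map_comp; apply: eq_map => l /=; rewrite /f /fch valKd.
have hfull : forall y, nonneg y -> g y = SF g f 0 m.-1 y.
  move=> z zn; rewrite hchain // (CFnat _ _ (f 0%N)) hseq size_map size_iota /SF.
  congr (_ - _); apply: eq_big_nat => l /andP[_ hl];
    rewrite !(nth_map 0%N) ?size_iota ?nth_iota //; lia.
have Sg := @Seg R m g i hi k g0 hexp hfull.
pose h l := if (l < k)%N then l else l.+1.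
have RHSe : chain_formula g [seq i l | l <- enum 'I_m & l != k] y =
   \sum_(0 <= l < m.-2) margG g (pred2 (f (h l)) (f (h l.+1))) y
   - \sum_(1 <= l < m.-2) y (f (h l)).
  rewrite seq_filter (CFnat _ _ (f 0%N)) !size_map size_iota.
  congr (_ - _); apply: eq_big_nat => l /andP[_ hl];
    rewrite !(nth_map 0%N) ?size_map ?size_iota ?nth_iota //; lia.
rewrite RHSe fk.
have km := ltn_ord k.
have invm j : (invF hi j < m)%N by exact: ltn_ord.
have [k0|kpos] := eqVneq (k : nat) 0%N.
  rewrite (@margG_ext _ _ g _ (seg hi 1 m.-1)); last first.
    by move=> j; rewrite /seg (fch_eq hi) // k0; have := invm j; lia.
  rewrite (Sg 1%N) //; try lia; last first.
    by move=> j sj; apply: yn; rewrite fk (fch_eq hi) //; move: sj; rewrite /seg k0; lia.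
  rewrite /SF !big_add1 /=; congr (_ - _); apply: eq_big_nat => l _; by rewrite /h k0.
have [km1|kn] := eqVneq (k : nat) m.-1.
  rewrite (@margG_ext _ _ g _ (seg hi 0 m.-2)); last first.
    by move=> j; rewrite /seg (fch_eq hi) // km1; have := invm j; lia.
  rewrite (Sg 1%N) //; try lia; last first.
    by move=> j sj; apply: yn; rewrite fk (fch_eq hi) //; move: sj; rewrite /seg km1; lia.
  rewrite /SF; congr (_ - _); apply: eq_big_nat => l /andP[_ hl].
    have h1 : (l < k)%N by lia.
    have h2 : (l.+1 < k)%N by lia.
    by rewrite /h h1 h2.
  have h1 : (l < k)%N by lia.
  by rewrite /h h1.
have [k' kk] : exists k', (k : nat) = k'.+1 by exists (k.-1); lia.
have kk1 : (k'.+2 < m)%N by lia.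
rewrite (@margG_step _ _ _ g0 (seg hi 0 m.-1) (fun j => j != f k) (f k) y); last first.
- by move=> j; rewrite -fk; apply: yn.
- by rewrite /= eqxx.
- by move=> j; rewrite orbN /seg; have := invm j; lia.
set C0 := (\sum_(0 <= l < k') margG g (pred2 (f l) (f l.+1)) y
     + \sum_(k'.+2 <= l < m.-1) margG g (pred2 (f l) (f l.+1)) y
     - \sum_(1 <= l < k'.+1) y (f l) - \sum_(k'.+2 <= l < m.-1) y (f l)).
rewrite (@image_eqP _ _ _ _ (fun t => margG g (seg hi k' k'.+2) (upd y (f k) t) + C0)); last first.
  move=> t t0.
  have yt : forall j, 0 <= upd y (f k) t j.
    by move=> j; rewrite /upd; case: eqP => // /eqP; rewrite -fk; apply: yn.
  rewrite (Sg 0%N) //; try lia; try by move=> j _; apply: yt.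
  rewrite (@SF_split _ _ _ _ k'); last by lia.
  rewrite (Sg (k' + (m.-1 - k'.+2))%N) //; try lia; try by move=> j _; apply: yt.
  congr (_ + _); rewrite /C0 kk.
  have nk l : (l < m)%N -> l != k'.+1 -> upd y (f k'.+1) t (f l) = y (f l).
    move=> lm lk; rewrite /upd fch_inj //; last by lia.
    by case: ifP => // /eqP e; rewrite e eqxx in lk.
  have nG l : (l.+1 < m)%N -> l != k'.+1 -> l.+1 != k'.+1 ->
    margG g (pred2 (f l) (f l.+1)) (upd y (f k'.+1) t) = margG g (pred2 (f l) (f l.+1)) y.
    by move=> lm l1 l2; apply: margG_loc => j /orP[] /eqP ->; apply: nk => //; lia.
  congr (_ + _ - _ - _); apply: eq_big_nat => l /andP[l1 l2];
    [apply: nG | apply: nG | apply: nk | apply: nk]; lia.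
rewrite (@inf_shift _ _ _ (fun t => margG g (seg hi k' k'.+2) (upd y (f k) t)));
  [| by exists 0; rewrite /= lexx | by exists 0 => _ [t _ <-]; apply: margG_ge0].
rewrite -(@margG_step _ _ _ g0 (seg hi k' k'.+2) (pred2 (f k') (f k'.+2)) (f k) y); last first.
- move=> j /orP[] /eqP ->; apply: yn; rewrite fk fch_inj //; lia.
- rewrite /= !fch_inj //; try lia.
- move=> j; rewrite /= /seg !(fch_eq hi) //; have := invm j; lia.
rewrite /C0 (@big_cat_nat _ _ _ k' 0%N m.-2); try lia.
rewrite (@big_cat_nat _ _ _ k'.+1 k' m.-2); try lia.
rewrite big_nat1.
rewrite (@big_cat_nat _ _ _ k'.+1 1%N m.-2); try lia.
have -> : \sum_(k'.+2 <= l < m.-1) margG g (pred2 (f l) (f l.+1)) y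
   = \sum_(k'.+1 <= l < m.-2) margG g (pred2 (f (h l)) (f (h l.+1))) y.
  rewrite big_add1; apply: eq_big_nat => l /andP[l1 l2].
  have h1 : (k <= l)%N by lia.
  have h2 : (k <= l.+1)%N by lia.
  by rewrite /h ltnNge h1 ltnNge h2.
have -> : \sum_(k'.+2 <= l < m.-1) y (f l) = \sum_(k'.+1 <= l < m.-2) y (f (h l)).
  rewrite big_add1; apply: eq_big_nat => l /andP[l1 l2].
  have h1 : (k <= l)%N by lia.
  by rewrite /h ltnNge h1.
have -> : \sum_(0 <= l < k') margG g (pred2 (f (h l)) (f (h l.+1))) y
   = \sum_(0 <= l < k') margG g (pred2 (f l) (f l.+1)) y.
  apply: eq_big_nat => l /andP[l1 l2].
  have h1 : (l < k)%N by lia.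
  have h2 : (l.+1 < k)%N by lia.
  by rewrite /h h1 h2.
have -> : \sum_(1 <= l < k'.+1) y (f (h l)) = \sum_(1 <= l < k'.+1) y (f l).
  apply: eq_big_nat => l /andP[l1 l2].
  have h1 : (l < k)%N by lia.
  by rewrite /h h1.
have -> : h k' = k' by rewrite /h kk ltnSn.
have -> : h k'.+1 = k'.+2 by rewrite /h kk ltnn.
rewrite /=; ring.
Qed.
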